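(* Let $\mu_c,\mu_s\in\mathbb{R}$, $c\ge0$, $\sigma_c,\sigma_s>0$, $\eta_c,\eta_s>0$. Let $U^*$ be the optimal value of $$\max_{r\in\mathbb{R}}\; p_0+r\mu_c-c-\eta_c r^2\sigma_c^2\quad\text{subject to}\quad p_0=\mu_s(1-r)-\eta_s\sigma_s^2(1-r)^2,$$ and let $U_0=\mu_s-\eta_s\sigma_s^2-c$ be the creator utility without royalties ($r=0$). Then the utility gain from royalties is $$f:=U^*-U_0=\frac{\big(2\eta_s\sigma_s^2-\mu_s+\mu_c\big)^2}{4\big(\eta_s\sigma_s^2+\eta_c\sigma_c^2\big)}\ge 0.$$ Moreover, viewing $f$ as a function of $(\mu_s,\mu_c,\eta_s,\eta_c,\sigma_s,\sigma_c)$: $f$ is increasing in $\sigma_s$ (i.e. $\partial f/\partial\sigma_s\ge0$) if and only if $-2\eta_s\sigma_s^2-4\eta_c\sigma_c^2\le\mu_s-\mu_c\le 2\eta_s\sigma_s^2$; and $f$ (weakly) decreases as $\sigma_c$ increases.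
   Context: Interpretation: a creator sells an NFT at mint price $p_0$ with royalty rate $r$ to a speculator who resells at the realized end-buyer valuation $V$. The creator believes $\mathbb{E}[V]=\mu_c$, $\mathrm{Var}(V)=\sigma_c^2$; the speculator believes $\mathbb{E}[V]=\mu_s$, $\mathrm{Var}(V)=\sigma_s^2$. Each has mean-variance utility with risk-aversion coefficient $\eta_c$ resp. $\eta_s$ (creator profit $p_0+rV-c$, speculator profit $(1-r)V-p_0$); the constraint is the speculator's binding participation constraint under his own beliefs. *)

(* Defs.v *)
From Stdlib Require Import Reals.
From Coquelicot Require Import Coquelicot.
Open Scope R_scope.

(* Mint price forced by the speculator's binding participation constraint. *)
Definition mint_price (mus etas sigs r : R) : R :=
  mus * (1 - r) - etas * sigs ^ 2 * (1 - r) ^ 2.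

Definition creator_obj (mus muc etas etac sigs sigc c r : R) : R :=
  mint_price mus etas sigs r + r * muc - c - etac * r ^ 2 * sigc ^ 2.

Definition Ustar (mus muc etas etac sigs sigc c : R) : R :=
  real (Lub_Rbar (fun v => exists r : R, v = creator_obj mus muc etas etac sigs sigc c r)).

Definition U0 (mus etas sigs c : R) : R := mus - etas * sigs ^ 2 - c.

Definition gain (mus muc etas etac sigs sigc c : R) : R :=
  Ustar mus muc etas etac sigs sigc c - U0 mus etas sigs c.

(* Main.v *)
Require Import Defs.
From Stdlib Require Import Reals Lra Psatz.
From Coquelicot Require Import Coquelicot.
Open Scope R_scope.

Definition Vmax (mus muc etas etac sigs sigc c : R) :=
  U0 mus etas sigs c + (2 * etas * sigs ^ 2 - mus + muc) ^ 2 / (4 * (etas * sigs ^ 2 + etac * sigc ^ 2)).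

Definition rstar (mus muc etas etac sigs sigc : R) :=
  (2 * etas * sigs ^ 2 - mus + muc) / (2 * (etas * sigs ^ 2 + etac * sigc ^ 2)).

Lemma obj_id mus muc etas etac sigs sigc c r :
  0 < etas * sigs ^ 2 + etac * sigc ^ 2 ->
  Vmax mus muc etas etac sigs sigc c - creator_obj mus muc etas etac sigs sigc c r
  = (etas * sigs ^ 2 + etac * sigc ^ 2) * (r - rstar mus muc etas etac sigs sigc) ^ 2.
Proof.
  intro H. unfold Vmax, U0, creator_obj, mint_price, rstar. field. lra.
Qed.

Lemma Ustar_eq mus muc etas etac sigs sigc c :
  0 < etas * sigs ^ 2 + etac * sigc ^ 2 ->
  Ustar mus muc etas etac sigs sigc c = Vmax mus muc etas etac sigs sigc c.
Proof.
  intro H. unfold Ustar.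
  rewrite (is_lub_Rbar_unique _ (Finite (Vmax mus muc etas etac sigs sigc c))); [reflexivity|].
  split.
  - intros v [r ->]. simpl.
    pose proof (obj_id mus muc etas etac sigs sigc c r H).
    assert (0 <= (etas * sigs ^ 2 + etac * sigc ^ 2) * (r - rstar mus muc etas etac sigs sigc) ^ 2).
    { apply Rmult_le_pos; [lra | apply pow2_ge_0]. }
    lra.
  - intros b Hb. apply Hb. exists (rstar mus muc etas etac sigs sigc).
    pose proof (obj_id mus muc etas etac sigs sigc c (rstar mus muc etas etac sigs sigc) H).
    replace ((rstar mus muc etas etac sigs sigc - rstar mus muc etas etac sigs sigc) ^ 2) with 0 in H0 by ring.
    lra.
Qed.

Lemma gain_eq mus muc etas etac sigs sigc c :
  0 < etas * sigs ^ 2 + etac * sigc ^ 2 ->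
  gain mus muc etas etac sigs sigc c
    = (2 * etas * sigs ^ 2 - mus + muc) ^ 2 / (4 * (etas * sigs ^ 2 + etac * sigc ^ 2)).
Proof.
  intro H. unfold gain. rewrite Ustar_eq by exact H. unfold Vmax. ring.
Qed.

Lemma pos_ab etas etac s sigc : 0 < etas -> 0 < etac -> 0 < sigc ->
  0 < etas * s ^ 2 + etac * sigc ^ 2.
Proof.
  intros. assert (0 <= etas * s ^ 2) by (apply Rmult_le_pos; [lra|apply pow2_ge_0]).
  assert (0 < etac * sigc ^ 2) by (apply Rmult_lt_0_compat; [lra|apply pow_lt; lra]). lra.
Qed.

Theorem theorem8 (mus muc c sigc sigs etac etas : R)
  (hc : 0 <= c) (hsigc : 0 < sigc) (hsigs : 0 < sigs)
  (hetac : 0 < etac) (hetas : 0 < etas) :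
  (* U* is attained, i.e. it is the maximum of the problem *)
  (exists r : R, creator_obj mus muc etas etac sigs sigc c r = Ustar mus muc etas etac sigs sigc c) /\
  (forall r : R, creator_obj mus muc etas etac sigs sigc c r <= Ustar mus muc etas etac sigs sigc c) /\
  (* closed form of the gain and its nonnegativity *)
  gain mus muc etas etac sigs sigc c
    = (2 * etas * sigs ^ 2 - mus + muc) ^ 2 / (4 * (etas * sigs ^ 2 + etac * sigc ^ 2)) /\
  0 <= gain mus muc etas etac sigs sigc c /\
  (* monotonicity in sigma_s *)
  (0 <= Derive (fun s => gain mus muc etas etac s sigc c) sigs <->
     - 2 * etas * sigs ^ 2 - 4 * etac * sigc ^ 2 <= mus - muc /\ mus - muc <= 2 * etas * sigs ^ 2) /\
  (* weakly decreasing in sigma_c on sigma_c > 0 *)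
  (forall s1 s2 : R, 0 < s1 -> s1 <= s2 ->
     gain mus muc etas etac sigs s2 c <= gain mus muc etas etac sigs s1 c).
Proof.
  pose proof (pos_ab etas etac sigs sigc hetas hetac hsigc) as Hab.
  split; [|split; [|split; [|split; [|split]]]].
  - exists (rstar mus muc etas etac sigs sigc). rewrite Ustar_eq by exact Hab.
    pose proof (obj_id mus muc etas etac sigs sigc c (rstar mus muc etas etac sigs sigc) Hab).
    replace ((rstar mus muc etas etac sigs sigc - rstar mus muc etas etac sigs sigc) ^ 2) with 0 in H by ring.
    lra.
  - intro r. rewrite Ustar_eq by exact Hab.
    pose proof (obj_id mus muc etas etac sigs sigc c r Hab).
    assert (0 <= (etas * sigs ^ 2 + etac * sigc ^ 2) * (r - rstar mus muc etas etac sigs sigc) ^ 2).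
    { apply Rmult_le_pos; [lra | apply pow2_ge_0]. }
    lra.
  - apply gain_eq; exact Hab.
  - rewrite gain_eq by exact Hab. unfold Rdiv. apply Rmult_le_pos; [apply pow2_ge_0|].
    left; apply Rinv_0_lt_compat; lra.
  - set (N := 2 * etas * sigs ^ 2 - mus + muc).
    set (M := etas * sigs ^ 2 + etac * sigc ^ 2).
    assert (HD : is_derive (fun s => (2 * etas * s ^ 2 - mus + muc) ^ 2 / (4 * (etas * s ^ 2 + etac * sigc ^ 2))) sigs
              (8 * etas * sigs * N * (4 * M - N) / (16 * M ^ 2))).
    { auto_derive.
      - unfold M in *. lra.
      - unfold N, M. field. lra. }
    assert (HE : Derive (fun s => gain mus muc etas etac s sigc c) sigs
                 = 8 * etas * sigs * N * (4 * M - N) / (16 * M ^ 2)).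
    { rewrite (Derive_ext _ (fun s => (2 * etas * s ^ 2 - mus + muc) ^ 2 / (4 * (etas * s ^ 2 + etac * sigc ^ 2)))).
      - apply is_derive_unique. exact HD.
      - intro t. apply gain_eq, pos_ab; assumption. }
    rewrite HE.
    assert (HM2 : 0 < 16 * M ^ 2) by (unfold M; nra).
    assert (Hs : 0 < 8 * etas * sigs) by nra.
    split.
    + intro H0.
      assert (HP : 0 <= N * (4 * M - N)).
      { assert (0 <= 8 * etas * sigs * N * (4 * M - N)).
        { apply (Rmult_le_reg_r (/ (16 * M ^ 2))). apply Rinv_0_lt_compat; lra.
          rewrite Rmult_0_l. exact H0. }
        assert (0 <= (8 * etas * sigs) * (N * (4 * M - N))) by (rewrite <- !Rmult_assoc; lra).
        destruct (Rle_or_lt 0 (N * (4 * M - N))); [assumption|].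
        nra. }
      assert (HM : 0 < M) by (unfold M; exact Hab).
      destruct (Rle_or_lt 0 N).
      * unfold N, M in *. split; nra.
      * assert (4 * M - N > 0) by lra. nra.
    + intros [H1 H2].
      assert (0 <= N) by (unfold N in *; lra).
      assert (0 <= 4 * M - N) by (unfold N, M in *; lra).
      unfold Rdiv. apply Rmult_le_pos.
      * apply Rmult_le_pos; [apply Rmult_le_pos; lra| lra].
      * left; apply Rinv_0_lt_compat; lra.
  - intros s1 s2 h1 h12.
    pose proof (pos_ab etas etac sigs s1 hetas hetac h1).
    assert (h2 : 0 < s2) by lra.
    pose proof (pos_ab etas etac sigs s2 hetas hetac h2).
    rewrite !gain_eq by assumption.
    unfold Rdiv. apply Rmult_le_compat_l; [apply pow2_ge_0|].
    apply Rinv_le_contravar; [lra|].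
    assert (s1 ^ 2 <= s2 ^ 2) by (apply pow_incr; lra).
    nra.
Qed.
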